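(* The variety $\mathsf{V}(S_{(4,431)})$ is the ai-semiring variety defined by the identities $x^2y\approx xy$, $xy\approx yx$, $x^2\approx x^2+x$, $x+yz\approx x+yz+xyz$.
   Context: An ai-semiring is an algebra $(S,+,\cdot)$ with $(S,+)$ a semilattice, $(S,\cdot)$ a semigroup, and both distributive laws. $\mathsf{V}(S)$ is the variety generated by $S$; ''the ai-semiring variety defined by identities $\Sigma$'' is the class of all ai-semirings satisfying $\Sigma$. $S_{(4,431)}$ has carrier $\{1,2,3,4\}$; addition: $x+x=x$, $2+x=x$, $1+x=1$ for all $x$, $3+4=1$; multiplication (row $a$, column $b$ gives $a\cdot b$): row $1$: $1,2,1,1$; row $2$: $2,2,2,2$; row $3$: $1,2,1,1$; row $4$: $1,2,1,4$. *)

(* Defs.v *)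
Record aiSemiring := AiSemiring {
  carrier :> Type;
  sadd : carrier -> carrier -> carrier;
  smul : carrier -> carrier -> carrier;
  saddA : forall x y z, sadd x (sadd y z) = sadd (sadd x y) z;
  saddC : forall x y, sadd x y = sadd y x;
  saddxx : forall x, sadd x x = x;
  smulA : forall x y z, smul x (smul y z) = smul (smul x y) z;
  smulDl : forall x y z, smul (sadd x y) z = sadd (smul x z) (smul y z);
  smulDr : forall x y z, smul x (sadd y z) = sadd (smul x y) (smul x z)
}.

Arguments sadd {a} _ _.
Arguments smul {a} _ _.

Inductive el4 : Type := e1 | e2 | e3 | e4.

Definition add4 (a b : el4) : el4 :=
  match a, b with
  | e2, x => x
  | x, e2 => x
  | e1, _ => e1
  | _, e1 => e1
  | e3, e3 => e3
  | e4, e4 => e4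
  | e3, e4 => e1
  | e4, e3 => e1
  end.

Definition mul4 (a b : el4) : el4 :=
  match a, b with
  | e2, _ => e2
  | _, e2 => e2
  | e4, e4 => e4
  | _, _ => e1
  end.

Lemma add4A : forall x y z, add4 x (add4 y z) = add4 (add4 x y) z.
Proof. intros [] [] []; reflexivity. Qed.
Lemma add4C : forall x y, add4 x y = add4 y x.
Proof. intros [] []; reflexivity. Qed.
Lemma add4xx : forall x, add4 x x = x.
Proof. intros []; reflexivity. Qed.
Lemma mul4A : forall x y z, mul4 x (mul4 y z) = mul4 (mul4 x y) z.
Proof. intros [] [] []; reflexivity. Qed.
Lemma mul4Dl : forall x y z, mul4 (add4 x y) z = add4 (mul4 x z) (mul4 y z).
Proof. intros [] [] []; reflexivity. Qed.
Lemma mul4Dr : forall x y z, mul4 x (add4 y z) = add4 (mul4 x y) (mul4 x z).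
Proof. intros [] [] []; reflexivity. Qed.

Definition S4_431 : aiSemiring :=
  AiSemiring el4 add4 mul4 add4A add4C add4xx mul4A mul4Dl mul4Dr.

Definition is_hom {A B : aiSemiring} (f : A -> B) : Prop :=
  (forall x y, f (sadd x y) = sadd (f x) (f y)) /\
  (forall x y, f (smul x y) = smul (f x) (f y)).

(** Direct power S^I with pointwise operations: a subset P of I -> S closed
    under the pointwise operations is (the carrier of) a subalgebra. *)
Definition pw_closed {S : aiSemiring} {I : Type} (P : (I -> S) -> Prop) : Prop :=
  (forall u v, P u -> P v -> P (fun i => sadd (u i) (v i))) /\
  (forall u v, P u -> P v -> P (fun i => smul (u i) (v i))).

(** A belongs to V(S) = HSP(S): A is a homomorphic image of a subalgebra
    of a direct power of S.  [h] is a surjective map from the subalgebra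
    carrier {u | P u} onto A preserving the (pointwise) operations. *)
Definition in_variety_gen (S A : aiSemiring) : Prop :=
  exists (I : Type) (P : (I -> S) -> Prop) (h : {u : I -> S | P u} -> A),
    pw_closed P /\
    (forall u v w : {u : I -> S | P u},
        (forall i, proj1_sig w i = sadd (proj1_sig u i) (proj1_sig v i)) ->
        h w = sadd (h u) (h v)) /\
    (forall u v w : {u : I -> S | P u},
        (forall i, proj1_sig w i = smul (proj1_sig u i) (proj1_sig v i)) ->
        h w = smul (h u) (h v)) /\
    (forall a : A, exists u, h u = a).

Definition satisfies_Sigma (A : aiSemiring) : Prop :=
  (forall x y : A, smul (smul x x) y = smul x y) /\
  (forall x y : A, smul x y = smul y x) /\
  (forall x : A, smul x x = sadd (smul x x) x) /\
  (forall x y z : A,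
      sadd x (smul y z) = sadd (sadd x (smul y z)) (smul (smul x y) z)).

(* Main.v *)
Require Import Defs.
From Stdlib Require Import List Classical ClassicalEpsilon.
Import ListNotations.

Inductive term (X : Type) : Type :=
| Var : X -> term X | Add : term X -> term X -> term X | Mul : term X -> term X -> term X.
Arguments Var {X}. Arguments Add {X}. Arguments Mul {X}.

Fixpoint ev {B : aiSemiring} {X : Type} (f : X -> B) (t : term X) : B :=
  match t with Var x => f x | Add t u => sadd (ev f t) (ev f u)
  | Mul t u => smul (ev f t) (ev f u) end.

Fixpoint mpl {B : aiSemiring} {X : Type} (f : X -> B) (a : X) (l : list X) : B :=
  match l with nil => f a | b :: l' => smul (f a) (mpl f b l') end.

Definition mon (X : Type) := (X * list X)%type.
Definition mv {B : aiSemiring} {X : Type} (f : X -> B) (m : mon X) : B := mpl f (fst m) (snd m).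

Fixpoint psl {B : aiSemiring} {X : Type} (f : X -> B) (m : mon X) (ms : list (mon X)) : B :=
  match ms with nil => mv f m | m' :: ms' => sadd (mv f m) (psl f m' ms') end.

Definition nf (X : Type) := (mon X * list (mon X))%type.
Definition psum {B : aiSemiring} {X : Type} (f : X -> B) (M : nf X) : B := psl f (fst M) (snd M).

Lemma mpl_app {B : aiSemiring} {X : Type} (f : X -> B) l : forall a b l',
  mpl f a (l ++ b :: l') = smul (mpl f a l) (mpl f b l').
Proof. induction l as [|c l IH]; intros; simpl; [reflexivity|]. rewrite IH, smulA; reflexivity. Qed.

Lemma psl_app {B : aiSemiring} {X : Type} (f : X -> B) ms : forall m n ns,
  psl f m (ms ++ n :: ns) = sadd (psl f m ms) (psl f n ns).
Proof. induction ms as [|c ms IH]; intros; simpl; [reflexivity|]. rewrite IH, saddA; reflexivity. Qed.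

Definition mmul {X : Type} (m n : mon X) : mon X := (fst m, snd m ++ fst n :: snd n).

Lemma mv_mmul {B : aiSemiring} {X : Type} (f : X -> B) m n :
  mv f (mmul m n) = smul (mv f m) (mv f n).
Proof. unfold mv, mmul; simpl. apply mpl_app. Qed.

Definition mulMon {X : Type} (p : mon X) (N : nf X) : nf X :=
  (mmul p (fst N), map (mmul p) (snd N)).

Lemma psum_mulMon {B : aiSemiring} {X : Type} (f : X -> B) p N :
  psum f (mulMon p N) = smul (mv f p) (psum f N).
Proof.
  destruct N as [n ns]; unfold psum, mulMon; simpl. revert n.
  induction ns as [|c ns IH]; intros; simpl.
  - apply mv_mmul.
  - rewrite IH, mv_mmul, smulDr; reflexivity.
Qed.

Fixpoint mulS {X : Type} (m : mon X) (ms : list (mon X)) (N : nf X) : nf X :=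
  match ms with
  | nil => mulMon m N
  | m' :: ms' => let P := mulMon m N in let Q := mulS m' ms' N in
       (fst P, snd P ++ fst Q :: snd Q)
  end.

Lemma psum_mulS {B : aiSemiring} {X : Type} (f : X -> B) ms : forall m N,
  psum f (mulS m ms N) = smul (psl f m ms) (psum f N).
Proof.
  induction ms as [|c ms IH]; intros; simpl.
  - apply psum_mulMon.
  - unfold psum at 1; simpl. rewrite psl_app.
    change (sadd (psum f (mulMon m N)) (psum f (mulS c ms N)) = smul (sadd (mv f m) (psl f c ms)) (psum f N)).
    rewrite IH, psum_mulMon, smulDl; reflexivity.
Qed.

Fixpoint flat {X : Type} (t : term X) : nf X :=
  match t with
  | Var x => ((x, nil), nil)
  | Add t u => let M := flat t in let N := flat u in (fst M, snd M ++ fst N :: snd N)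
  | Mul t u => let M := flat t in mulS (fst M) (snd M) (flat u)
  end.

Lemma ev_flat {B : aiSemiring} {X : Type} (f : X -> B) t : ev f t = psum f (flat t).
Proof.
  induction t as [x|t IHt u IHu|t IHt u IHu]; simpl.
  - reflexivity.
  - rewrite IHt, IHu. unfold psum; simpl. rewrite psl_app. reflexivity.
  - rewrite psum_mulS, IHt, IHu. reflexivity.
Qed.

Definition inNF {X : Type} (q : mon X) (M : nf X) : Prop := q = fst M \/ In q (snd M).
Definition le {B : aiSemiring} (x y : B) : Prop := sadd x y = y.

Lemma le_refl {B : aiSemiring} (x : B) : le x x.
Proof. apply saddxx. Qed.
Lemma le_trans {B : aiSemiring} (x y z : B) : le x y -> le y z -> le x z.
Proof. unfold le; intros H1 H2. rewrite <- H2, saddA, H1; reflexivity. Qed.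
Lemma le_antisym {B : aiSemiring} (x y : B) : le x y -> le y x -> x = y.
Proof. unfold le; intros H1 H2. transitivity (sadd x y); [rewrite saddC; symmetry; exact H2 | exact H1]. Qed.
Lemma le_addl {B : aiSemiring} (x y : B) : le x (sadd x y).
Proof. unfold le. rewrite saddA, saddxx; reflexivity. Qed.
Lemma le_addr {B : aiSemiring} (x y : B) : le y (sadd x y).
Proof. unfold le. rewrite saddC, <- saddA, saddxx; reflexivity. Qed.
Lemma le_add {B : aiSemiring} (x y z : B) : le x z -> le y z -> le (sadd x y) z.
Proof. unfold le; intros H1 H2. rewrite <- saddA, H2, H1; reflexivity. Qed.
Lemma le_mulr {B : aiSemiring} (x y z : B) : le x y -> le (smul x z) (smul y z).
Proof. unfold le; intros H. rewrite <- smulDl, H; reflexivity. Qed.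

Lemma le_psum {B : aiSemiring} {X : Type} (f : X -> B) q M :
  inNF q M -> le (mv f q) (psum f M).
Proof.
  destruct M as [m ms]; unfold inNF, psum; simpl. revert m.
  induction ms as [|c ms IH]; intros m [H|H]; simpl; subst.
  - apply le_refl.
  - destruct H.
  - apply le_addl.
  - eapply le_trans; [|apply le_addr]. apply IH. destruct H; [left|right]; auto.
Qed.

Lemma psum_le {B : aiSemiring} {X : Type} (f : X -> B) M s :
  (forall q, inNF q M -> le (mv f q) s) -> le (psum f M) s.
Proof.
  destruct M as [m ms]; unfold inNF, psum; simpl. revert m.
  induction ms as [|c ms IH]; intros m H; simpl.
  - apply H; auto.
  - apply le_add; [apply H; auto|]. apply IH. intros q [E|E]; apply H; right; simpl; auto.
Qed.

Lemma R2 (A : aiSemiring) (HS : satisfies_Sigma A) (p t y z : A) :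
  le p t -> le (smul y z) t -> le (smul p (smul y z)) t.
Proof.
  destruct HS as [H1 [H2 [H3 H4]]]. intros Hp Hyz.
  assert (Ht : le (smul (smul t y) z) t).
  { unfold le. pose proof (H4 t y z) as E. unfold le in Hyz.
    rewrite saddC in Hyz. rewrite Hyz in E. rewrite saddC. symmetry; exact E. }
  rewrite smulA. eapply le_trans; [|exact Ht]. apply le_mulr, le_mulr, Hp.
Qed.

Lemma absorb1 (A : aiSemiring) (HS : satisfies_Sigma A) {X : Type} (f : X -> A) l :
  forall a x, l <> [] -> In x (a :: l) -> smul (mpl f a l) (f x) = mpl f a l.
Proof.
  destruct HS as [H1 [H2 [H3 H4]]].
  induction l as [|b l' IH]; intros a x Hl Hx; [congruence|]. simpl.
  destruct Hx as [<-|Hx].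
  - rewrite <- smulA, (H2 (mpl f b l')), smulA, H1. reflexivity.
  - destruct l' as [|c l''].
    + simpl in *. destruct Hx as [<-|[]].
      rewrite <- smulA, H2, H1, H2. reflexivity.
    + rewrite <- smulA, (IH b x); [reflexivity|congruence|exact Hx].
Qed.

Lemma absorb (A : aiSemiring) (HS : satisfies_Sigma A) {X : Type} (f : X -> A) lb :
  forall a l b, l <> [] -> (forall y, In y (b :: lb) -> In y (a :: l)) ->
  smul (mpl f a l) (mpl f b lb) = mpl f a l.
Proof.
  induction lb as [|c lb IH]; intros a l b Hl Hin; simpl.
  - apply absorb1; auto. apply Hin; simpl; auto.
  - rewrite smulA, (absorb1 A HS f l a b Hl); [|apply Hin; simpl; auto].
    apply IH; auto. intros y Hy; apply Hin; simpl; auto.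
Qed.

Lemma content_eq (A : aiSemiring) (HS : satisfies_Sigma A) {X : Type} (f : X -> A) a l b lb :
  l <> [] -> lb <> [] -> (forall y, In y (b :: lb) -> In y (a :: l)) ->
  (forall y, In y (a :: l) -> In y (b :: lb)) -> mpl f a l = mpl f b lb.
Proof.
  intros Hl Hlb I1 I2. pose proof HS as [H1 [H2 _]].
  rewrite <- (absorb A HS f lb a l b Hl I1), H2. apply absorb; auto.
Qed.

Lemma sq_le (A : aiSemiring) (HS : satisfies_Sigma A) {X : Type} (f : X -> A) a b lb :
  lb <> [] -> (forall y, In y (b :: lb) -> y = a) -> le (f a) (mpl f b lb).
Proof.
  intros Hlb Hall. pose proof HS as [H1 [H2 [H3 _]]].
  rewrite <- (content_eq A HS f a [a] b lb); try congruence.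
  - simpl. unfold le. rewrite saddC, <- H3. reflexivity.
  - intros y Hy. rewrite (Hall y Hy). simpl; auto.
  - intros y Hy. simpl in Hy. assert (y = a) by (destruct Hy as [|[|[]]]; auto). subst.
    destruct lb; [congruence|]. specialize (Hall b (or_introl eq_refl)). subst; simpl; auto.
Qed.

Lemma build (A : aiSemiring) (HS : satisfies_Sigma A) {X : Type} (f : X -> A) (M : nf X) (C : list X)
  (Ha : exists b0 l0, inNF (b0, l0) M /\ l0 <> [] /\ forall y, In y (b0 :: l0) -> In y C)
  (Hb : forall x, In x C -> inNF (x, []) M \/ exists b lb, inNF (b, lb) M /\ lb <> [] /\
        (forall y, In y (b :: lb) -> In y C) /\ In x (b :: lb)) :
  forall u, incl u C -> exists b' l', l' <> [] /\ (forall y, In y (b' :: l') -> In y C) /\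
     incl u (b' :: l') /\ le (mpl f b' l') (psum f M).
Proof.
  induction u as [|x u IH]; intros Hu.
  - destruct Ha as [b0 [l0 [H1 [H2 H3]]]]. exists b0, l0. repeat split; auto.
    + intros y [].
    + apply (le_psum f (b0, l0) M H1).
  - destruct IH as [b' [l' [K1 [K2 [K3 K4]]]]]. { intros y Hy; apply Hu; simpl; auto. }
    assert (HxC : In x C) by (apply Hu; simpl; auto).
    destruct l' as [|c0 l0']; [congruence|].
    destruct (Hb x HxC) as [Hlin | [b [lb [L1 [L2 [L3 L4]]]]]].
    + exists x, (b' :: c0 :: l0'). repeat split; try congruence.
      * intros y [<-|Hy]; auto.
      * intros y [<-|Hy]; simpl; auto. right. apply K3; auto.
      * change (le (smul (f x) (smul (f b') (mpl f c0 l0'))) (psum f M)).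
        apply R2; auto. apply (le_psum f (x, []) M Hlin).
    + exists b, (lb ++ b' :: c0 :: l0'). repeat split.
      * destruct lb; simpl; congruence.
      * intros y Hy. change (In y ((b :: lb) ++ b' :: c0 :: l0')) in Hy.
        apply in_app_iff in Hy as [Hy|Hy]; auto.
      * intros y Hy. change (In y ((b :: lb) ++ b' :: c0 :: l0')). apply in_app_iff.
        destruct Hy as [<-|Hy]; [left; exact L4 | right; apply K3; exact Hy].
      * rewrite mpl_app. change (le (smul (mpl f b lb) (smul (f b') (mpl f c0 l0'))) (psum f M)).
        apply R2; auto. apply (le_psum f (b, lb) M L1).
Qed.

Lemma S_mp2 {X : Type} (v : X -> S4_431) l : forall a y,
  In y (a :: l) -> v y = e2 -> mpl v a l = e2.
Proof.
  induction l as [|b l IH]; intros a y Hy Hv; simpl in *.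
  - destruct Hy as [<-|[]]; auto.
  - destruct Hy as [<-|Hy].
    + rewrite Hv; reflexivity.
    + rewrite (IH b y Hy Hv). destruct (v a); reflexivity.
Qed.

Lemma S_mp4 {X : Type} (v : X -> S4_431) l : forall a,
  (forall y, In y (a :: l) -> v y = e4) -> mpl v a l = e4.
Proof.
  induction l as [|b l IH]; intros a H; simpl.
  - apply H; simpl; auto.
  - rewrite IH, (H a); simpl; auto. intros y Hy; apply H; simpl in *; auto.
Qed.

Lemma S_mp34 {X : Type} (v : X -> S4_431) l : forall a,
  (forall y, In y (a :: l) -> v y = e3 \/ v y = e4) -> mpl v a l <> e2.
Proof.
  induction l as [|b l IH]; intros a H; simpl.
  - destruct (H a) as [E|E]; simpl; auto; rewrite E; discriminate.
  - assert (R := IH b (fun y Hy => H y (or_intror Hy))).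
    destruct (H a (or_introl eq_refl)) as [E|E]; rewrite E;
    destruct (mpl v b l); simpl in *; try discriminate; congruence.
Qed.

Lemma S_mp1 {X : Type} (v : X -> S4_431) l : forall a,
  l <> [] -> (forall y, In y (a :: l) -> v y = e3 \/ v y = e4) ->
  (exists y, In y (a :: l) /\ v y = e3) -> mpl v a l = e1.
Proof.
  induction l as [|b l IH]; intros a Hl H [y [Hy Ey]]; [congruence|]. simpl.
  assert (R := S_mp34 v l b (fun y Hy => H y (or_intror Hy))).
  destruct (H a (or_introl eq_refl)) as [E|E]; rewrite E.
  - destruct (mpl v b l); simpl; congruence.
  - destruct Hy as [<-|Hy]; [congruence|].
    destruct l as [|c l].
    + simpl in *. destruct Hy as [<-|[]]. rewrite Ey; reflexivity.
    + rewrite IH; [reflexivity|congruence| |exists y; auto].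
      intros z Hz; apply H; simpl; auto.
Qed.

Lemma S_ps {X : Type} (v : X -> S4_431) (Q : S4_431 -> Prop)
  (HQ : forall x y, Q x -> Q y -> Q (add4 x y)) (M : nf X) :
  (forall q, inNF q M -> Q (mv v q)) -> Q (psum v M).
Proof.
  destruct M as [m ms]; unfold inNF, psum; simpl. revert m.
  induction ms as [|c ms IH]; intros m H; simpl.
  - apply H; auto.
  - apply HQ; [apply H; auto|]. apply IH. intros q [E|E]; apply H; right; simpl; auto.
Qed.

Definition emi := excluded_middle_informative.

Lemma derive_lin {X : Type} (M : nf X) (a : X) :
  (forall v : X -> S4_431, le (mv v (a, [])) (psum v M)) ->
  exists q, inNF q M /\ forall y, In y (fst q :: snd q) -> y = a.
Proof.
  intros H. destruct (classic (exists q, inNF q M /\ forall y, In y (fst q :: snd q) -> y = a))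
    as [K|K]; [exact K|exfalso].
  set (v := (fun y : X => if emi (y = a) then e4 else e2) : X -> carrier S4_431).
  specialize (H v). unfold le in H.
  assert (Va : mv v (a, []) = e4). { unfold mv, v; simpl. destruct (emi (a = a)); [reflexivity|congruence]. }
  assert (P2 : psum v M = e2).
  { apply (S_ps v (fun x => x = e2)); [intros x y -> ->; reflexivity|].
    intros q Hq. destruct (classic (forall y, In y (fst q :: snd q) -> y = a)) as [Hall|Hn].
    - exfalso; apply K; exists q; auto.
    - apply not_all_ex_not in Hn as [y Hy]. apply imply_to_and in Hy as [Hy1 Hy2].
      apply (S_mp2 v (snd q) (fst q) y Hy1). unfold v. destruct (emi (y = a)); congruence. }
  rewrite Va, P2 in H. discriminate.
Qed.

Lemma derive_a {X : Type} (M : nf X) (a : X) (l : list X) : l <> [] ->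
  (forall v : X -> S4_431, le (mpl v a l) (psum v M)) ->
  exists b0 l0, inNF (b0, l0) M /\ l0 <> [] /\ forall y, In y (b0 :: l0) -> In y (a :: l).
Proof.
  intros Hl H. destruct (classic (exists b0 l0, inNF (b0, l0) M /\ l0 <> [] /\
     forall y, In y (b0 :: l0) -> In y (a :: l))) as [K|K]; [exact K|exfalso].
  set (v := (fun y : X => if emi (In y (a :: l)) then e3 else e2) : X -> carrier S4_431).
  specialize (H v). unfold le in H.
  assert (Va : mpl v a l = e1).
  { apply S_mp1; auto.
    - intros y Hy; left; unfold v; destruct (emi (In y (a :: l))); congruence.
    - exists a; split; [simpl; auto|]. unfold v; destruct (emi (In a (a :: l))) as [|n];
      [reflexivity|exfalso; apply n; simpl; auto]. }
  assert (P2 : psum v M = e2 \/ psum v M = e3).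
  { apply (S_ps v (fun x => x = e2 \/ x = e3)).
    { intros x y [->| ->] [->| ->]; simpl; auto. }
    intros [b lb] Hq. destruct (classic (forall y, In y (b :: lb) -> In y (a :: l))) as [Hall|Hn].
    - destruct lb as [|c lb].
      + right. unfold mv, v; cbn [mpl fst snd]. destruct (emi _) as [|n]; [reflexivity|].
        exfalso; apply n, Hall; simpl; auto.
      + exfalso; apply K; exists b, (c :: lb); repeat split; auto; congruence.
    - apply not_all_ex_not in Hn as [y Hy]. apply imply_to_and in Hy as [Hy1 Hy2].
      left. apply (S_mp2 v lb b y Hy1). unfold v. destruct (emi (In y (a :: l))); congruence. }
  rewrite Va in H. destruct P2 as [E|E]; rewrite E in H; discriminate.
Qed.

Lemma derive_b {X : Type} (M : nf X) (a : X) (l : list X) : l <> [] ->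
  (forall v : X -> S4_431, le (mpl v a l) (psum v M)) ->
  forall x, In x (a :: l) -> inNF (x, []) M \/ exists b lb, inNF (b, lb) M /\ lb <> [] /\
        (forall y, In y (b :: lb) -> In y (a :: l)) /\ In x (b :: lb).
Proof.
  intros Hl H x Hx. destruct (classic (inNF (x, []) M \/ exists b lb, inNF (b, lb) M /\ lb <> [] /\
        (forall y, In y (b :: lb) -> In y (a :: l)) /\ In x (b :: lb))) as [K|K]; [exact K|exfalso].
  set (v := (fun y : X => if emi (y = x) then e3 else if emi (In y (a :: l)) then e4 else e2) : X -> carrier S4_431).
  specialize (H v). unfold le in H.
  assert (Va : mpl v a l = e1).
  { apply S_mp1; auto.
    - intros y Hy; unfold v; destruct (emi (y = x)); [left; reflexivity|right].
      destruct (emi (In y (a :: l))); congruence.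
    - exists x; split; auto. unfold v; destruct (emi (x = x)); congruence. }
  assert (P2 : psum v M = e2 \/ psum v M = e4).
  { apply (S_ps v (fun x => x = e2 \/ x = e4)).
    { intros x0 y [->| ->] [->| ->]; simpl; auto. }
    intros [b lb] Hq. destruct (classic (forall y, In y (b :: lb) -> In y (a :: l))) as [Hall|Hn].
    - destruct (classic (In x (b :: lb))) as [Hxb|Hxb].
      + exfalso. destruct lb as [|c lb].
        * destruct Hxb as [<-|[]]. apply K; left; exact Hq.
        * apply K; right; exists b, (c :: lb); repeat split; auto; congruence.
      + right. apply S_mp4. intros y Hy. unfold v. destruct (emi (y = x)) as [->|]; [contradiction|].
        destruct (emi (In y (a :: l))) as [|nn]; [reflexivity|exfalso; apply nn, Hall, Hy].
    - apply not_all_ex_not in Hn as [y Hy]. apply imply_to_and in Hy as [Hy1 Hy2].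
      left. apply (S_mp2 v lb b y Hy1). unfold v. destruct (emi (y = x)) as [->|]; [contradiction|].
      destruct (emi (In y (a :: l))); congruence. }
  rewrite Va in H. destruct P2 as [E|E]; rewrite E in H; discriminate.
Qed.

Lemma MON (A : aiSemiring) (HS : satisfies_Sigma A) {X : Type} (f : X -> A) (q : mon X) (M : nf X) :
  (forall v : X -> S4_431, le (mv v q) (psum v M)) -> le (mv f q) (psum f M).
Proof.
  destruct q as [a l]. intros H. destruct l as [|c l].
  - destruct (derive_lin M a H) as [[b lb] [Hq Hall]]. simpl in Hall.
    destruct lb as [|c lb].
    + assert (b = a) by (apply Hall; simpl; auto). subst. apply (le_psum f _ M Hq).
    + eapply le_trans; [|apply (le_psum f _ M Hq)]. change (le (f a) (mpl f b (c :: lb))).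
      apply sq_le; auto. congruence.
  - assert (Hl : c :: l <> []) by congruence.
    pose proof (derive_a M a (c :: l) Hl H) as Ha.
    pose proof (derive_b M a (c :: l) Hl H) as Hb.
    destruct (build A HS f M (a :: c :: l) Ha Hb (a :: c :: l) (incl_refl _))
      as [b' [l' [K1 [K2 [K3 K4]]]]].
    unfold mv; cbn [fst snd]. rewrite (content_eq A HS f a (c :: l) b' l'); auto.
Qed.

Lemma KEY (A : aiSemiring) (HS : satisfies_Sigma A) (t1 t2 : term A) :
  (forall v : A -> S4_431, ev v t1 = ev v t2) -> ev (fun x : A => x) t1 = ev (fun x : A => x) t2.
Proof.
  intros H.
  assert (G : forall s1 s2 : term A, (forall v : A -> S4_431, ev v s1 = ev v s2) ->
     le (ev (fun x : A => x) s2) (ev (fun x : A => x) s1)).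
  { intros s1 s2 E. rewrite !ev_flat. apply psum_le. intros q Hq. apply MON; auto.
    intros v. rewrite <- ev_flat, E, ev_flat. apply le_psum; auto. }
  apply le_antisym; apply G; auto.
Qed.

Lemma S_Sigma : satisfies_Sigma S4_431.
Proof.
  repeat split; simpl; intros; repeat match goal with x : el4 |- _ => destruct x end; reflexivity.
Qed.

Definition Pterm (A : aiSemiring) (u : (A -> S4_431) -> S4_431) : Prop :=
  exists t : term A, forall v, u v = ev v t.

Definition pick (A : aiSemiring) (w : {u : (A -> S4_431) -> S4_431 | Pterm A u}) : term A :=
  proj1_sig (constructive_indefinite_description _ (proj2_sig w)).

Lemma pick_spec (A : aiSemiring) w : forall v, proj1_sig w v = ev v (pick A w).
Proof. unfold pick. destruct (constructive_indefinite_description _ _) as [t Ht]. exact Ht. Qed.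

Theorem proposition7p4 :
  forall A : aiSemiring, in_variety_gen S4_431 A <-> satisfies_Sigma A.
Proof.
  intros A. split.
  - intros [I [P [h [[Pa Pm] [Hadd [Hmul Hsurj]]]]]].
    pose proof S_Sigma as [S1 [S2 [S3 S4]]].
    set (pm := fun u w : {u : I -> S4_431 | P u} =>
           exist P (fun i => smul (proj1_sig u i) (proj1_sig w i)) (Pm _ _ (proj2_sig u) (proj2_sig w))).
    set (pa := fun u w : {u : I -> S4_431 | P u} =>
           exist P (fun i => sadd (proj1_sig u i) (proj1_sig w i)) (Pa _ _ (proj2_sig u) (proj2_sig w))).
    assert (HM : forall u w, h (pm u w) = smul (h u) (h w)) by (intros; apply Hmul; reflexivity).
    assert (HA : forall u w, h (pa u w) = sadd (h u) (h w)) by (intros; apply Hadd; reflexivity).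
    repeat split.
    + intros x y. destruct (Hsurj x) as [u <-]. destruct (Hsurj y) as [w <-].
      rewrite <- (HM u w), <- (HM u u).
      symmetry. apply Hmul. intros i. simpl. symmetry. apply S1.
    + intros x y. destruct (Hsurj x) as [u <-]. destruct (Hsurj y) as [w <-].
      rewrite <- (HM u w). apply Hmul. intros i. simpl. apply S2.
    + intros x. destruct (Hsurj x) as [u <-].
      rewrite <- (HM u u). apply Hadd. intros i. simpl. apply S3.
    + intros x y z. destruct (Hsurj x) as [u <-]. destruct (Hsurj y) as [w <-].
      destruct (Hsurj z) as [r <-].
      rewrite <- (HM w r), <- (HA u (pm w r)), <- (HM u w), <- (HM (pm u w) r).
      apply Hadd. intros i. simpl. apply S4.
  - intros HS.
    exists (A -> S4_431), (Pterm A), (fun w => ev (fun x : A => x) (pick A w)).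
    split; [|split; [|split]].
    + split.
      * intros u w [t1 H1] [t2 H2]. exists (Add t1 t2). intros v; simpl. rewrite H1, H2; reflexivity.
      * intros u w [t1 H1] [t2 H2]. exists (Mul t1 t2). intros v; simpl. rewrite H1, H2; reflexivity.
    + intros u w z Hz. change (ev (fun x : A => x) (pick A z) =
        ev (fun x : A => x) (Add (pick A u) (pick A w))).
      apply KEY; auto. intros v. simpl. rewrite <- !pick_spec. apply Hz.
    + intros u w z Hz. change (ev (fun x : A => x) (pick A z) =
        ev (fun x : A => x) (Mul (pick A u) (pick A w))).
      apply KEY; auto. intros v. simpl. rewrite <- !pick_spec. apply Hz.
    + intros a.
      assert (Pa : Pterm A (fun v => v a)) by (exists (Var a); reflexivity).
      exists (exist _ (fun v => v a) Pa).
      change (ev (fun x : A => x) (pick A (exist _ (fun v => v a) Pa)) = ev (fun x : A => x) (Var a)).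
      apply KEY; auto. intros v. rewrite <- pick_spec. reflexivity.
Qed.
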